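(* Let $\underline{\mathrm{set}}$ be the category of finite sets. Then its Grothendieck heap $\mathrm{K}_0^{\mathrm{heap}}(\underline{\mathrm{set}})$ is isomorphic to the heap associated with $(\mathbb{Z},+)$, i.e. $\mathbb{Z}$ with $[a,b,c]=a-b+c$, via $\overline{A}\mapsto |A|$; moreover, the truss structure induced by the cartesian product, $\overline{A}\,\overline{B}=\overline{A\times B}$, coincides with the truss associated with the ring $(\mathbb{Z},+,\cdot)$.
   Context: A heap is a set $H$ with a ternary operation $[\_,\_,\_]:H^3\to H$ satisfying $[a,b,[c,d,e]]=[[a,b,c],d,e]$ and $[x,x,y]=y=[y,x,x]$; a truss is a heap with a multiplication satisfying $[wx,wy,wz]=w[x,y,z]$ and $[xw,yw,zw]=[x,y,z]w$. The truss associated with a ring $R$ is $R$ with $[a,b,c]=a-b+c$ and the ring multiplication. For an essentially small category $\mathcal{C}$, its Grothendieck heap $\mathrm{K}_0^{\mathrm{heap}}(\mathcal{C})$ is the heap generated by the isomorphism classes $\overline{X}$ of objects of $\mathcal{C}$, subject to the relations $[\overline{X},\overline{Y},\overline{Z}]=\overline{X\sqcup_Y Z}$ for every pushout square $X\leftarrow Y\rightarrow Z$ in $\mathcal{C}$ in which at least one of the two maps $Y\to X$, $Y\to Z$ is a monomorphism. *)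

(* Defs.v *)
(* The category `set` of finite sets is modelled with
   objects = finTypes and morphisms = (Coq) functions between them, equality
   of morphisms being pointwise equality. *)
From mathcomp Require Import all_boot all_order all_algebra.
Set Implicit Arguments. Unset Strict Implicit. Unset Printing Implicit Defensive.
Import Order.TTheory GRing.Theory Num.Theory.

Definition fs_iso (X Y : finType) : Prop :=
  exists (f : X -> Y) (g : Y -> X), (forall x, g (f x) = x) /\ (forall y, f (g y) = y).

Definition fs_mono (Y X : finType) (f : Y -> X) : Prop :=
  forall (W : finType) (h1 h2 : W -> Y),
    (forall w, f (h1 w) = f (h2 w)) -> forall w, h1 w = h2 w.

Definition fs_pushout (X Y Z P : finType) (f : Y -> X) (g : Y -> Z)
  (i : X -> P) (j : Z -> P) : Prop :=
  (forall y, i (f y) = j (g y)) /\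
  forall (W : finType) (u : X -> W) (v : Z -> W),
    (forall y, u (f y) = v (g y)) ->
    exists h : P -> W,
      (forall x, h (i x) = u x) /\ (forall z, h (j z) = v z) /\
      forall h' : P -> W, (forall x, h' (i x) = u x) -> (forall z, h' (j z) = v z) ->
        forall p, h' p = h p.

Inductive hterm : Type :=
  | hgen : finType -> hterm
  | hop : hterm -> hterm -> hterm -> hterm.

(* The congruence presenting the Grothendieck heap K0^heap(set):
   heap axioms, generators are isomorphism classes, and the pushout
   relations [X, Y, Z] = X ⊔_Y Z when one leg is a monomorphism. *)
Inductive heq : hterm -> hterm -> Prop :=
  | heq_refl t : heq t t
  | heq_sym s t : heq s t -> heq t s
  | heq_trans s t u : heq s t -> heq t u -> heq s u
  | heq_op a b c a' b' c' : heq a a' -> heq b b' -> heq c c' ->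
      heq (hop a b c) (hop a' b' c')
  | heq_assoc a b c d e : heq (hop a b (hop c d e)) (hop (hop a b c) d e)
  | heq_cancl x y : heq (hop x x y) y
  | heq_cancr x y : heq (hop y x x) y
  | heq_iso (X Y : finType) : fs_iso X Y -> heq (hgen X) (hgen Y)
  | heq_pushout (X Y Z P : finType) (f : Y -> X) (g : Y -> Z)
      (i : X -> P) (j : Z -> P) :
      (fs_mono f \/ fs_mono g) -> fs_pushout f g i j ->
      heq (hop (hgen X) (hgen Y) (hgen Z)) (hgen P).

(* K0^heap(set) is hterm modulo heq.  The map induced by  A |-> |A|
   into the heap of (Z,+), [a,b,c] = a - b + c. *)
Fixpoint hcard (t : hterm) : int :=
  match t with
  | hgen A => (#|A| : int)
  | hop a b c => (hcard a - hcard b + hcard c)%R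
  end.

Fixpoint hmul_gen (A : finType) (t : hterm) : hterm :=
  match t with
  | hgen B => hgen (A * B)%type
  | hop x y z => hop (hmul_gen A x) (hmul_gen A y) (hmul_gen A z)
  end.

Fixpoint hmul (s t : hterm) : hterm :=
  match s with
  | hgen A => hmul_gen A t
  | hop a b c => hop (hmul a t) (hmul b t) (hmul c t)
  end.

(* Main.v *)
Require Import Defs.
From mathcomp Require Import all_boot all_order all_algebra zify.
From Stdlib Require Import Setoid Morphisms.
Import Order.TTheory GRing.Theory Num.Theory.

Lemma mono_inj (Y X : finType) (f : Y -> X) : fs_mono f -> injective f.
Proof. move=> m y1 y2 e. exact: (m unit (fun _ => y1) (fun _ => y2) (fun _ => e) tt). Qed.

Lemma pushout_sym (X Y Z P : finType) (f : Y -> X) (g : Y -> Z) (i : X -> P) (j : Z -> P) :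
  fs_pushout f g i j -> fs_pushout g f j i.
Proof.
case=> comm univ; split=> [y|W u v e]; first by rewrite comm.
have [h [h1 [h2 h3]]] := univ W v u (fun y => esym (e y)).
exists h; split=> //; split=> // h' e1 e2; exact: h3.
Qed.

Lemma pushout_card (X Y Z P : finType) (f : Y -> X) (g : Y -> Z) (i : X -> P) (j : Z -> P) :
  injective f -> fs_pushout f g i j -> (#|P| + #|Y| = #|X| + #|Z|)%N.
Proof.
move=> finj [comm univ].
have surj : forall p, (p \in codom j) || (p \in codom i).
  have [h [_ [_ hu]]] := univ bool (fun _ => true) (fun _ => true) (fun _ => erefl).
  move=> p.
  have e1 := hu (fun p => (p \in codom j) || (p \in codom i))
     (fun x => introT orP (or_intror (codom_f i x)))
     (fun z => introT orP (or_introl (codom_f j z))) p.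
  have e2 := hu (fun _ => true) (fun _ => erefl) (fun _ => erefl) p.
  by rewrite e1 -e2.
pose u x := if [pick y | f y == x] is Some y then Some (g y) else None.
have uf : forall y, u (f y) = Some (g y).
  move=> y; rewrite /u; case: pickP => [y' /eqP/finj -> //|/(_ y)].
  by rewrite eqxx.
have [h [_ [hj _]]] := univ (option Z) u Some uf.
have jinj : injective j.
  by move=> z1 z2 e; apply: Some_inj; rewrite -!hj e.
pose u2 x := if x \in codom f then None else Some x.
have u2f : forall y, u2 (f y) = None by move=> y; rewrite /u2 codom_f.
have [h2 [h2i [h2j _]]] := univ (option X) u2 (fun _ => None) u2f.
have iinj : {in [predC codom f] &, injective i}.
  move=> x1 x2 /= H1 H2 e.
  have := h2i x1; have := h2i x2; rewrite /u2 (negbTE H1) (negbTE H2) e.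
  by move=> -> [].
have eqim : [predC codom j] =i [seq i x | x in [predC codom f]].
  move=> p; rewrite !inE; apply/idP/idP.
  - move=> pj; have := surj p; rewrite (negbTE pj) /= => /codomP [x px]; subst p.
    apply: map_f; rewrite mem_enum !inE.
    apply/negP => /codomP [y xe]; move: pj; rewrite xe comm.
    by rewrite codom_f.
  - move=> /mapP [x]; rewrite mem_enum !inE => xf ->.
    apply/negP => /codomP [z e].
    have := h2i x; rewrite /u2 (negbTE xf) e h2j; done.
have c1 := cardC [pred p | p \in codom j].
have c2 := cardC [pred x | x \in codom f].
have e1 : #|[pred p | p \in codom j]| = #|Z| by rewrite -(card_codom jinj); apply: eq_card.
have e2 : #|[pred x | x \in codom f]| = #|Y| by rewrite -(card_codom finj); apply: eq_card.
have e3 : #|[predC [pred p | p \in codom j]]| = #|[predC [pred x | x \in codom f]]|.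
  rewrite -(card_in_image iinj); apply: eq_card => p; rewrite eqim //.
rewrite -c1 -c2 e1 e2 e3.
set C := #|[predC [pred x in codom f]]|. lia.
Qed.
Import Order.TTheory GRing.Theory Num.Theory.

Add Relation hterm heq
  reflexivity proved by heq_refl
  symmetry proved by heq_sym
  transitivity proved by heq_trans as heq_rel.

Add Morphism hop with signature heq ==> heq ==> heq ==> heq as hop_mor.
Proof. by move=> *; apply: heq_op. Qed.

Lemma hassoc a b c d e : heq (hop (hop a b c) d e) (hop a b (hop c d e)).
Proof. apply: heq_sym; exact: heq_assoc. Qed.

Lemma hmid a b c d e : heq (hop a (hop d c b) e) (hop (hop a b c) d e).
Proof.
have H : heq (hop (hop a b c) d (hop d c b)) a.
  rewrite heq_assoc heq_cancr hassoc heq_cancl heq_cancr; reflexivity.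
rewrite -{2}(heq_cancl (hop d c b) e) heq_assoc H; reflexivity.
Qed.

Definition N n := hgen 'I_n.
Definition E := N 0.
Definition D p q := hop (N p) (N q) E.

Lemma from0 (T : Type) (y : 'I_0) : T.
Proof. by case: y. Qed.

Lemma coprod (A B : finType) : heq (hop (hgen A) E (hgen B)) (hgen (A + B)%type).
Proof.
apply: (heq_pushout (f := @from0 A) (g := @from0 B) (i := inl) (j := inr)).
  by left=> W h1 h2 _ w; case: (h1 w).
split=> [[]//|W u v _].
exists (fun p => match p with inl x => u x | inr z => v z end).
by split=> //; split=> // h' e1 e2 [x|z].
Qed.

Lemma iso_ord (A : finType) : fs_iso A 'I_#|A|.
Proof. exists enum_rank, enum_val; split; [exact: enum_rankK | exact: enum_valK]. Qed.

Lemma card_heq (A B : finType) : #|A| = #|B| -> heq (hgen A) (hgen B).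
Proof.
move=> e; apply: heq_trans (heq_iso (iso_ord A)) _.
apply: heq_sym; apply: heq_trans (heq_iso (iso_ord B)) _.
rewrite e; exact: heq_refl.
Qed.

Lemma N_add a c : heq (hop (N a) E (N c)) (N (a + c)).
Proof. rewrite coprod; apply: card_heq; by rewrite card_sum !card_ord. Qed.

Lemma Nsub a b c : heq (hop (N a) (N b) (N (b + c))) (N (a + c)).
Proof. rewrite -N_add heq_assoc heq_cancr N_add; reflexivity. Qed.

Lemma shift p q k : heq (D (p + k) (q + k)) (D p q).
Proof.
rewrite /D -!N_add hmid (hassoc (N p) E (N k)) heq_cancl heq_cancr; reflexivity.
Qed.

Lemma D_eq p q p' q' : (p + q' = p' + q)%N -> heq (D p q) (D p' q').
Proof.
move=> e; rewrite -(shift p q q') -(shift p' q' q) e (addnC q q'); reflexivity.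
Qed.

Lemma hcard_N n : hcard (N n) = n.
Proof. by rewrite /= card_ord. Qed.

Lemma sound s t : heq s t -> hcard s = hcard t.
Proof.
elim=> /=; try by (move=> *; lia).
- move=> X Y [f [g [fg gf]]]; congr Posz; apply: (bij_eq_card (f := f)).
  by exists g.
- move=> X Y Z P f g i j [fm|gm] po.
  + have := @pushout_card _ _ _ _ _ _ _ _ (@mono_inj _ _ _ fm) po; move=> /(congr1 Posz); rewrite !PoszD => H; rewrite -[RHS]addr0 -(subrr (Posz #|Y|)) addrA H. by rewrite addrAC.
  + have := @pushout_card _ _ _ _ _ _ _ _ (@mono_inj _ _ _ gm) (@pushout_sym _ _ _ _ _ _ _ _ po); move=> /(congr1 Posz); rewrite !PoszD => H; rewrite -[RHS]addr0 -(subrr (Posz #|Y|)) addrA H; by rewrite (addrC (Posz #|Z|)) addrAC.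
Qed.

Lemma normal t : exists p q : nat, hcard t = (p%:Z - q%:Z)%R /\ heq t (D p q).
Proof.
elim: t => [A|t1 [p1 [q1 [c1 h1]]] t2 [p2 [q2 [c2 h2]]] t3 [p3 [q3 [c3 h3]]]].
  exists #|A|, 0%N; split; first by rewrite /=; lia.
  apply: heq_trans (heq_iso (iso_ord A)) _; apply: heq_sym; exact: heq_cancr.
exists (p1 + (q2 + (q1 + p3)) - q1)%N, (q3 + (p2 + q1))%N.
split; first by rewrite /= c1 c2 c3; lia.
rewrite h1 h2 h3 -(shift p3 q3 (p2 + q1)) /D.
rewrite hmid (hassoc (N p1) (N q1) E) heq_cancl (hassoc (N p1) (N q1) (N q2)).
rewrite (heq_assoc (N q2)).
have -> : (p3 + (p2 + q1) = p2 + (q1 + p3))%N by lia.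
rewrite Nsub heq_assoc.
have -> : (q2 + (q1 + p3) = q1 + (q2 + p3))%N by lia.
rewrite Nsub.
have -> : (p1 + (q1 + (q2 + p3)) - q1 = p1 + (q2 + p3))%N by lia.
reflexivity.
Qed.

Lemma inj s t : hcard s = hcard t -> heq s t.
Proof.
have [p [q [cs hs]]] := normal s; have [p' [q' [ct ht]]] := normal t.
move=> e; apply: heq_trans hs _; apply: heq_sym; apply: heq_trans ht _.
apply: D_eq; lia.
Qed.

Lemma hcard_mul_gen A t : hcard (hmul_gen A t) = (Posz #|A| * hcard t)%R.
Proof.
elim: t => [B|a IHa b IHb c IHc] /=; first by rewrite card_prod PoszM.
by rewrite IHa IHb IHc mulrDr mulrBr.
Qed.

Lemma hcard_mul s t : hcard (hmul s t) = (hcard s * hcard t)%R.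
Proof.
elim: s => [A|a IHa b IHb c IHc] /=; first exact: hcard_mul_gen.
by rewrite IHa IHb IHc mulrDl mulrBl.
Qed.

Theorem mainTheorem6 :
  (* A |-> |A| induces a well-defined heap morphism K0^heap(set) -> (Z, a-b+c) *)
  (forall s t, heq s t -> hcard s = hcard t) /\
  (forall a b c, hcard (hop a b c) = (hcard a - hcard b + hcard c)%R) /\
  (* which is injective *)
  (forall s t, hcard s = hcard t -> heq s t) /\
  (* and surjective *)
  (forall n : int, exists t, hcard t = n) /\
  (* the product induced by the cartesian product is well defined on K0^heap(set) *)
  (forall s s' t t', heq s s' -> heq t t' -> heq (hmul s t) (hmul s' t')) /\
  (* and corresponds to the ring multiplication of Z *)
  (forall s t, hcard (hmul s t) = (hcard s * hcard t)%R).
Proof.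
split; first exact: sound.
split; first by [].
split; first exact: inj.
split.
  case=> k; first by exists (N k); rewrite hcard_N.
  exists (hop E (N k.+1) E); rewrite /= !card_ord NegzE; lia.
split; last exact: hcard_mul.
move=> s s' t t' hs ht; apply: inj; rewrite !hcard_mul (@sound _ _ hs) (@sound _ _ ht) //.
Qed.
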